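(* Let $\mathrm A$ be a nontrivial system of Bilocal Classical Theory (BCT) and $\rho=\sum_ip_i|i)_{\mathrm A}$ a deterministic state. For every $N$ and every channel $\mathcal C\in\mathsf{Tr}_1(\mathrm A^{\boxtimes N}\to\mathrm A^{\boxtimes N})$ define \[ \tilde D(\rho^{\boxtimes N},\mathcal C)=\sum_{\mathbf i,\mathbf s}\frac{1}{2^{N-1}}p_{\mathbf i}\,\big\|\big((\mathcal C-\mathcal I_{\mathrm A^{\boxtimes N}})\boxtimes\mathcal I_{\mathrm A^{\boxtimes N}}\big)|(\mathbf i_{\mathbf s}\mathbf i_{\mathbf s})_+)_{\mathrm A^{\boxtimes N}\mathrm A^{\boxtimes N}}\big\|_{\rm op}, \] with $p_{\mathbf i}=p_{i_1}\cdots p_{i_N}$, and let $\tilde I(\rho)$ be defined exactly as the information content $I(\rho)$ but with $D(\rho^{\boxtimes N},\mathcal D\mathcal E)$ replaced by $\tilde D(\rho^{\boxtimes N},\mathcal D\mathcal E)$ in the definition of compression schemes. Then $I(\rho)=\tilde I(\rho)$.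
   Context: BCT is an operational probabilistic theory with the following structure. Systems: a trivial system $\mathrm I$ and, for every integer $D>1$, exactly one system of size $D$. For a nontrivial system $\mathrm A$ of size $D_{\mathrm A}$, every state is a nonnegative combination $\sum_ip_i|i)_{\mathrm A}$ of the $D_{\mathrm A}$ pure states, which are the vertices of the simplex of deterministic states and are jointly perfectly discriminable; each system has a unique deterministic effect $e_{\mathrm A}$ with $(e_{\mathrm A}|i)=1$. For nontrivial $\mathrm A,\mathrm B$, the composite $\mathrm{AB}$ has size $2D_{\mathrm A}D_{\mathrm B}$ and pure states $|(ij)_s)_{\mathrm{AB}}$, $s\in\{+,-\}$, with $|i)_{\mathrm A}\boxtimes|j)_{\mathrm B}=\tfrac12\sum_{s=\pm}|(ij)_s)_{\mathrm{AB}}$ and $((ij)_{s_1}k)_{s_2}=(i(jk)_{s_1s_2})_{s_1}$. Transformations act linearly; channels $\mathcal C\in\mathsf{Tr}_1(\mathrm E\to\mathrm F)$ are exactly those for which for each $j$ there is a probability distribution $\{\lambda^{(j)}_{m\tau}\}$ over $(m,\tau)\in\{1,\dots,D_{\mathrm F}\}\times\{\pm\}$ with $(\mathcal I_{\mathrm A}\boxtimes\mathcal C)|(ij)_s)_{\mathrm{AE}}=\sum_{m,\tau}\lambda^{(j)}_{m\tau}|(im)_{\tau s})_{\mathrm{AF}}$ for every system $\mathrm A$. The system $\mathrm A^{\boxtimes N}=(\cdots((\mathrm A_1\mathrm A_2)\mathrm A_3)\cdots)\mathrm A_N$ (copies of $\mathrm A$) has pure states $|\mathbf i_{\mathbf s})$,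 $\mathbf i\in\{1,\dots,D_{\mathrm A}\}^N$, $\mathbf s\in\{\pm\}^{N-1}$, and $\rho^{\boxtimes N}=\sum_{\mathbf i,\mathbf s}p_{\mathbf i}2^{-(N-1)}|\mathbf i_{\mathbf s})$; $|(\mathbf i_{\mathbf s}\mathbf i_{\mathbf s})_+)$ is the pure state of $\mathrm A^{\boxtimes N}\mathrm A^{\boxtimes N}$ with both component labels $\mathbf i_{\mathbf s}$ and sign $+$. The bibit $\mathrm B$ is the system of size 2. Information content: a dilation of a state $\sigma$ of $\mathrm X$ is a state $\Psi$ of $\mathrm{XE}$ with $(\mathcal I_{\mathrm X}\boxtimes e_{\mathrm E})\Psi=\sigma$; a refinement of $\Psi$ is a finite collection of states from a common preparation test summing to $\Psi$. The operational norm is $\|\delta\|_{\rm op}=\sup_{\{a_0,a_1\}}(a_0-a_1|\delta)$ over binary observation tests (in BCT, the $\ell^1$-norm of the coefficients of $\delta$ in the pure-state basis). $D(\rho^{\boxtimes N},\mathcal C)=\sup_\Psi\sup_{\{\Gamma_i\}}\sum_i\|(\mathcal C\boxtimes\mathcal I_{\mathrm E})\Gamma_i-\Gamma_i\|_{\rm op}$ over dilations $\Psi$ of $\rho^{\boxtimes N}$ and refinements $\{\Gamma_i\}$ of $\Psi$. With $E_{N,M,\varepsilon}(\rho)$ the set of channel pairs $\mathcal E\in\mathsf{Tr}_1(\mathrm A^{\boxtimes N}\to\mathrm B^{\boxtimes M})$, $\mathcal D\in\mathsf{Tr}_1(\mathrm B^{\boxtimes M}\to\mathrm A^{\boxtimes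 N})$ with $D(\rho^{\boxtimes N},\mathcal D\mathcal E)<\varepsilon$, set $R_{N,\varepsilon}(\rho)=\min\{M:E_{N,M,\varepsilon}(\rho)\ne\emptyset\}/N$ and $I(\rho)=\lim_{\varepsilon\to0}\limsup_{N\to\infty}R_{N,\varepsilon}(\rho)$. *)

(* Defs.v *)
From HB Require Import structures.
From mathcomp Require Import all_boot all_order all_algebra.
From mathcomp Require Import all_classical all_reals all_analysis.
Set Implicit Arguments. Unset Strict Implicit. Unset Printing Implicit Defensive.
Import Order.TTheory GRing.Theory Num.Theory.
Local Open Scope classical_set_scope.
Local Open Scope ring_scope.

(* Conventions.
   - A nontrivial BCT system is described by the finite type X labelling its
     pure states; a state is its coefficient vector X -> R in the pure-state
     basis (a state iff all coefficients are >= 0).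
   - Sign labels s in {+,-} are booleans, true = +, and the product of signs
     is [sgn_mul t s] (i.e. + * + = +, - * - = +, ...).
   - A composite XE (E nontrivial, labels Y) has pure states |(x e)_s),
     labelled by X * Y * bool.
   - A channel X -> Y is given by its coefficients C x m t = lambda^{(x)}_{m t},
     a probability distribution over (m,t) for each x. *)

Definition sgn_mul (t s : bool) : bool := t == s.

Section BCT.
Variable R : realType.

Definition is_state (X : finType) (v : X -> R) := forall x, 0 <= v x.

Definition is_channel (X Y : finType) (C : X -> Y -> bool -> R) :=
  (forall x m t, 0 <= C x m t) /\ (forall x, \sum_(m : Y) \sum_(t : bool) C x m t = 1).

Definition id_ch (X : finType) : X -> X -> bool -> R :=
  fun x m t => if (m == x) && t then 1 else 0.

Definition comp_ch (X Y Z : finType) (Dc : Y -> Z -> bool -> R)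
  (Ec : X -> Y -> bool -> R) : X -> Z -> bool -> R :=
  fun x z t => \sum_(y : Y) \sum_(t1 : bool) \sum_(t2 : bool | sgn_mul t2 t1 == t)
                 Ec x y t1 * Dc y z t2.

Definition apply_ch (X Y : finType) (C : X -> Y -> bool -> R) (v : X -> R) : Y -> R :=
  fun m => \sum_(x : X) \sum_(t : bool) v x * C x m t.

(* action of C (x) I_E on the composite XE:
   (C (x) I_E)|(x e)_s) = sum_{m,t} lambda^{(x)}_{m t} |(m e)_{t s}) *)
Definition apply_ch_tens_id (X Y E : finType) (C : X -> Y -> bool -> R)
  (G : X * E * bool -> R) : Y * E * bool -> R :=
  fun k => let: (m, e, s') := k in
    \sum_(x : X) \sum_(s : bool) \sum_(t : bool | sgn_mul t s == s')
       G (x, e, s) * C x m t.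

(* marginal (I_X (x) e_E) on XE, using (e_E| e) = 1 and
   |x) (x) |e) = 1/2 sum_s |(x e)_s) *)
Definition marg (X E : finType) (G : X * E * bool -> R) : X -> R :=
  fun x => \sum_(e : E) \sum_(s : bool) G (x, e, s).

(* operational norm = l1 norm of the coefficients in the pure-state basis *)
Definition opnorm (X : finType) (v : X -> R) : R := \sum_(x : X) `|v x|.

Definition vsub (X : finType) (v w : X -> R) : X -> R := fun x => v x - w x.

(* D(sigma, C): sup over dilations Psi of sigma (in XE, E trivial or of any
   size d > 1) and refinements {Gamma_i} of Psi (finite families of states
   summing to Psi) of  sum_i || (C (x) I_E) Gamma_i - Gamma_i ||_op . *)
Definition D_err (X : finType) (sigma : X -> R) (C : X -> X -> bool -> R) : R :=
  sup [set r : R |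
    (* trivial environment: XI = X *)
    (exists (Psi : X -> R) (G : seq (X -> R)),
        Psi = sigma /\
        (forall g, g \in G -> is_state g) /\
        (forall x, \sum_(g <- G) g x = Psi x) /\
        r = \sum_(g <- G) opnorm (vsub (apply_ch C g) g))
    \/
    (exists (d : nat) (Psi : X * 'I_d * bool -> R) (G : seq (X * 'I_d * bool -> R)),
        (1 < d)%N /\ is_state Psi /\ marg Psi = sigma /\
        (forall g, g \in G -> is_state g) /\
        (forall k, \sum_(g <- G) g k = Psi k) /\
        r = \sum_(g <- G) opnorm (vsub (apply_ch_tens_id C g) g))].

Definition pure_diag (X : finType) (x : X) : X * X * bool -> R :=
  fun k => let: (a, b, s) := k in if (a == x) && (b == x) && s then 1 else 0.

(* tilde D(sigma, C) = sum_x sigma_x || ((C - I) (x) I_X) |(x x)_+) ||_op ;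
   for sigma = rho^{(x)N}, sigma_{(i,s)} = 2^{-(N-1)} p_i. *)
Definition D_tilde (X : finType) (sigma : X -> R) (C : X -> X -> bool -> R) : R :=
  \sum_(x : X) sigma x *
     opnorm (vsub (apply_ch_tens_id C (pure_diag x))
                  (apply_ch_tens_id (@id_ch X) (pure_diag x))).

(* pure-state labels of A^{(x)N} for N = n.+1 and A of size D:
   (i, s) with i in {1..D}^N and s in {+-}^(N-1) *)
Definition Aidx (D n : nat) : finType :=
  ({ffun 'I_n.+1 -> 'I_D} * {ffun 'I_n -> bool})%type.

Definition rhoN (D : nat) (p : 'I_D -> R) (n : nat) : Aidx D n -> R :=
  fun k => (\prod_(j < n.+1) p (k.1 j)) / 2 ^+ n.

Definition err_fun := forall X : finType, (X -> R) -> (X -> X -> bool -> R) -> R.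

(* E_{N,M,eps}(rho) <> empty, with N = n.+1, M = m.+1, B the bibit (size 2) *)
Definition schemes_exist (err : err_fun) (D : nat) (p : 'I_D -> R)
  (n m : nat) (eps : R) : Prop :=
  exists (Ec : Aidx D n -> Aidx 2 m -> bool -> R)
         (Dc : Aidx 2 m -> Aidx D n -> bool -> R),
    is_channel Ec /\ is_channel Dc /\
    err (Aidx D n) (@rhoN D p n) (comp_ch Dc Ec) < eps.

Definition rate (err : err_fun) (D : nat) (p : 'I_D -> R) (eps : R) (n : nat) : \bar R :=
  ereal_inf [set ((m.+1)%:R / (n.+1)%:R)%:E | m in [set m | schemes_exist err p n m eps]].

Definition info (err : err_fun) (D : nat) (p : 'I_D -> R) : \bar R :=
  lim ((fun eps : R => limn_esup (rate err p eps)) @ 0^'+).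

End BCT.

(* Main.v *)
Require Import Defs.
From HB Require Import structures.
From mathcomp Require Import all_boot all_order all_algebra.
From mathcomp Require Import all_classical all_reals all_analysis.
Import Order.TTheory GRing.Theory Num.Theory.
Local Open Scope ring_scope.

Section S.
Variable R : realType.

Lemma sumt (s s' : bool) (F : bool -> R) :
  \sum_(t | sgn_mul t s == s') F t = F (s' == s).
Proof. by rewrite big_mkcond big_bool /sgn_mul; case: s; case: s' => /=; rewrite ?addr0 ?add0r. Qed.

Lemma sum3 (X Y : finType) (F : X * Y * bool -> R) :
  \sum_k F k = \sum_x \sum_y \sum_s F (x, y, s).
Proof.
rewrite pair_bigA pair_bigA; by apply: eq_bigr => -[[x y] s].
Qed.

Lemma tens_eq (X E : finType) (C : X -> X -> bool -> R) (g : X * E * bool -> R) m e s' :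
  apply_ch_tens_id C g (m, e, s') = \sum_x \sum_s g (x, e, s) * C x m (s' == s).
Proof. by apply: eq_bigr => x _; apply: eq_bigr => s _; rewrite sumt. Qed.

Lemma id_part (X E : finType) (g : X * E * bool -> R) m e s' :
  \sum_x \sum_s g (x, e, s) * @id_ch R X x m (s' == s) = g (m, e, s').
Proof.
rewrite (bigD1 m) //= [X in _ + X]big1 ?addr0.
  rewrite big_bool /id_ch eqxx /=; case: s' => /=; rewrite ?mulr1 ?mulr0 ?addr0 ?add0r //.
move=> x /negPf hx; apply: big1 => s _; rewrite /id_ch eq_sym hx /= mulr0 //.
Qed.

Definition dev (X : finType) (C : X -> X -> bool -> R) (x : X) : R :=
  \sum_m \sum_t `|C x m t - @id_ch R X x m t|.
Arguments dev {X}.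

Lemma diff_tens (X E : finType) (C : X -> X -> bool -> R) (g : X * E * bool -> R) m e s' :
  apply_ch_tens_id C g (m, e, s') - g (m, e, s') =
  \sum_x \sum_s g (x, e, s) * (C x m (s' == s) - @id_ch R X x m (s' == s)).
Proof.
rewrite tens_eq -(@id_part X E g m e s') -sumrB; apply: eq_bigr => x _.
rewrite -sumrB; apply: eq_bigr => s _; by rewrite mulrBr.
Qed.

Lemma diff_triv (X : finType) (C : X -> X -> bool -> R) (g : X -> R) m :
  apply_ch C g m - g m = \sum_x \sum_t g x * (C x m t - @id_ch R X x m t).
Proof.
have -> : g m = \sum_x \sum_t g x * @id_ch R X x m t.
  rewrite (bigD1 m) //= [X in _ + X]big1 ?addr0.
    by rewrite big_bool /id_ch eqxx /= mulr1 mulr0 addr0.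
  move=> x /negPf hx; apply: big1 => s _; by rewrite /id_ch eq_sym hx /= mulr0.
rewrite -sumrB; apply: eq_bigr => x _.
rewrite -sumrB; apply: eq_bigr => s _; by rewrite mulrBr.
Qed.

Lemma ub_triv (X : finType) (C : X -> X -> bool -> R) (g : X -> R) :
  is_state g -> opnorm (vsub (apply_ch C g) g) <= \sum_x g x * dev C x.
Proof.
move=> hg; rewrite /opnorm /vsub.
under eq_bigr => m _ do rewrite diff_triv.
apply: (@le_trans _ _ (\sum_m \sum_x \sum_t g x * `|C x m t - @id_ch R X x m t|)).
  apply: ler_sum => m _; apply: (le_trans (ler_norm_sum _ _ _)).
  apply: ler_sum => x _; apply: (le_trans (ler_norm_sum _ _ _)).
  apply: ler_sum => t _; by rewrite normrM ger0_norm.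
rewrite exchange_big /=; apply: ler_sum => x _.
rewrite /dev mulr_sumr; apply: ler_sum => m _; by rewrite mulr_sumr.
Qed.

Lemma flip_sum (s : bool) (H : bool -> R) : \sum_s' H (s' == s) = \sum_t H t.
Proof. by rewrite !big_bool; case: s => //=; rewrite addrC. Qed.

Lemma ub_tens (X E : finType) (C : X -> X -> bool -> R) (g : X * E * bool -> R) :
  is_state g -> opnorm (vsub (apply_ch_tens_id C g) g) <=
     \sum_x \sum_e \sum_s g (x, e, s) * dev C x.
Proof.
move=> hg; rewrite /opnorm /vsub sum3.
under eq_bigr => m _ do under eq_bigr => e _ do under eq_bigr => s' _ do rewrite diff_tens.
apply: (@le_trans _ _ (\sum_m \sum_e \sum_s' \sum_x \sum_s
     g (x, e, s) * `|C x m (s' == s) - @id_ch R X x m (s' == s)|)).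
  apply: ler_sum => m _; apply: ler_sum => e _; apply: ler_sum => s' _.
  apply: (le_trans (ler_norm_sum _ _ _)).
  apply: ler_sum => x _; apply: (le_trans (ler_norm_sum _ _ _)).
  apply: ler_sum => t _; by rewrite normrM ger0_norm.
rewrite le_eqVlt; apply/orP; left; apply/eqP.
rewrite exchange_big /=.
have -> : \sum_x \sum_e \sum_s g (x, e, s) * dev C x =
   \sum_x \sum_e \sum_s \sum_m \sum_s' g (x, e, s) * `|C x m (s' == s) - @id_ch R X x m (s' == s)|.
  apply: eq_bigr => x _; apply: eq_bigr => e _; apply: eq_bigr => s _.
  rewrite /dev mulr_sumr; apply: eq_bigr => m _; rewrite mulr_sumr.
  by rewrite (flip_sum s (fun t => g (x, e, s) * `|C x m t - @id_ch R X x m t|)).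
rewrite [RHS]exchange_big /=; apply: eq_bigr => e _.
under eq_bigr => m _ do rewrite exchange_big /=.
under eq_bigr => m _ do under eq_bigr => x _ do rewrite exchange_big /=.
rewrite exchange_big /=; apply: eq_bigr => x _.
by rewrite exchange_big.
Qed.

Lemma point_sum (X E : finType) (x : X) (e0 : E) (c : R) (F : X -> bool -> R) (e : E) :
  \sum_y \sum_s (if (y == x) && (e == e0) && s then c else 0) * F y s =
  if e == e0 then c * F x true else 0.
Proof.
rewrite (bigD1 x) //= [X in _ + X]big1 ?addr0.
  by rewrite big_bool eqxx /=; case: (e == e0) => /=; rewrite ?andbF !mul0r ?addr0.
by move=> y /negPf hy; apply: big1 => s _; rewrite hy mul0r.
Qed.

Lemma opnorm_point (X E : finType) (e0 : E) (c : R) (A : X -> bool -> R) :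
  \sum_m \sum_e \sum_s' `|if e == e0 then c * A m s' else 0| =
  `|c| * \sum_m \sum_s' `|A m s'|.
Proof.
rewrite mulr_sumr; apply: eq_bigr => m _.
rewrite (bigD1 e0) //= [X in _ + X]big1 ?addr0.
  by rewrite eqxx mulr_sumr; apply: eq_bigr => s _; rewrite normrM.
by move=> e /negPf he; apply: big1 => s _; rewrite he normr0.
Qed.

Lemma Dtilde_eq (X : finType) (sigma : X -> R) (C : X -> X -> bool -> R) :
  D_tilde sigma C = \sum_x sigma x * dev C x.
Proof.
apply: eq_bigr => x _; congr (_ * _).
rewrite /opnorm sum3.
transitivity (\sum_m \sum_e \sum_s' `|if e == x then 1 * (C x m s' - @id_ch R X x m s') else 0|);
  last by rewrite (@opnorm_point X X x 1 (fun m s' => C x m s' - @id_ch R X x m s')) normr1 mul1r.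
apply: eq_bigr => m _; apply: eq_bigr => e _; apply: eq_bigr => s' _.
rewrite /vsub !tens_eq /pure_diag /=.
rewrite (@point_sum X X x x 1 (fun y s => C y m (s' == s))).
rewrite (@point_sum X X x x 1 (fun y s => @id_ch R X y m (s' == s))).
case: (e == x); last by rewrite subr0.
by rewrite !mul1r; case: s'.
Qed.

Lemma Derr_eq (X : finType) (sigma : X -> R) (C : X -> X -> bool -> R) :
  is_state sigma -> D_err sigma C = \sum_x sigma x * dev C x.
Proof.
move=> hs; rewrite /D_err; set T := \sum_x sigma x * dev C x.
set S := (X in sup X).
have ub : forall r, S r -> r <= T.
  move=> r [[Psi [G [-> [hG [hsum ->]]]]] | [d [Psi [G [hd [hPsi [hmarg [hG [hsum ->]]]]]]]]].
    apply: (@le_trans _ _ (\sum_(g <- G) \sum_x g x * dev C x)).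
      rewrite big_seq [X in _ <= X]big_seq; apply: ler_sum => g hg.
      exact: ub_triv (hG g hg).
    rewrite exchange_big /= le_eqVlt; apply/orP; left; apply/eqP.
    apply: eq_bigr => x _; by rewrite -mulr_suml hsum.
  apply: (@le_trans _ _ (\sum_(g <- G) \sum_x \sum_e \sum_s g (x, e, s) * dev C x)).
    rewrite big_seq [X in _ <= X]big_seq; apply: ler_sum => g hg.
    exact: ub_tens (hG g hg).
  rewrite exchange_big /= le_eqVlt; apply/orP; left; apply/eqP.
  apply: eq_bigr => x _; rewrite -hmarg /marg mulr_suml.
  rewrite exchange_big /=; apply: eq_bigr => e _; rewrite mulr_suml.
  rewrite exchange_big /=; apply: eq_bigr => s _.
  by rewrite -mulr_suml hsum.
have inS : S T.
  right.
  pose gx (x : X) := fun k : X * 'I_2 * bool => let: (y, e, s) := k in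
     if (y == x) && (e == ord0) && s then sigma x else 0.
  pose Psi := fun k : X * 'I_2 * bool => let: (y, e, s) := k in
     if (e == ord0) && s then sigma y else 0.
  exists 2%N, Psi, (map gx (enum X)).
  split; first by [].
  split; first by move=> [[y e] s]; rewrite /Psi; case: ifP.
  split.
    apply: funext => y; rewrite /marg /Psi (bigD1 ord0) //= big_bool /= addr0.
    by rewrite big1 ?addr0 // => e /negPf he; rewrite big_bool /= he /= addr0.
  split.
    move=> g /mapP [x _ ->] [[y e] s]; rewrite /gx; case: ifP => //.
  split.
    move=> [[y e] s]; rewrite big_map big_enum /=.
    rewrite (bigD1 y) //= big1 ?addr0; first by rewrite eqxx.
    by move=> x /negPf hx; rewrite eq_sym hx.
  rewrite big_map big_enum /=; apply: eq_bigr => x _.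
  rewrite /opnorm sum3.
  under eq_bigr => m _ do under eq_bigr => e _ do under eq_bigr => s' _ do
     rewrite /vsub diff_tens /gx (@point_sum X _ x ord0 (sigma x) (fun y s => C y m (s' == s) - @id_ch R X y m (s' == s)) e).
  rewrite (@opnorm_point X _ ord0 (sigma x) (fun m s' => C x m (s' == true) - @id_ch R X x m (s' == true))).
  rewrite ger0_norm //; congr (_ * _); apply: eq_bigr => m _; apply: eq_bigr => t _.
  by case: t.
apply/eqP; rewrite eq_le; apply/andP; split.
  by apply: ge_sup; [exists T | move=> r /ub].
by apply: ub_le_sup => //; exists T => r /ub.
Qed.

End S.

Theorem proposition2 (R : realType) (D : nat) (p : 'I_D -> R) :
  (1 < D)%N ->
  (forall i, 0 <= p i) -> \sum_(i < D) p i = 1 ->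
  info (@D_err R) p = info (@D_tilde R) p.
Proof.
move=> _ hp _.
have hS : forall n m eps, schemes_exist (@D_err R) p n m eps = schemes_exist (@D_tilde R) p n m eps.
  move=> n m eps; rewrite /schemes_exist.
  have hr : is_state (@rhoN R D p n).
    move=> k; rewrite /rhoN; apply: divr_ge0; first by apply: prodr_ge0.
    by apply: exprn_ge0.
  have E : forall C, D_err (@rhoN R D p n) C = D_tilde (@rhoN R D p n) C.
    by move=> C; rewrite Derr_eq // Dtilde_eq.
  apply: propext; split => -[Ec [Dc [h1 [h2 h3]]]]; exists Ec, Dc; split => //; split => //.
    by rewrite -E.
  by rewrite E.
rewrite /info /rate.
by under eq_fun => eps do under eq_fun => n do rewrite (_ : (fun m => _) = (fun m => schemes_exist (@D_tilde R) p n m eps)) ?(funext (fun m => hS n m eps)) //.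
Qed.
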